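(* For issues that are not binary, local dominance improvement dynamics need not converge, even if all agents use the $\ell_\infty$ distance with the same constant uncertainty parameters and all agents have $\mathcal O$-legal preferences for a common order $\mathcal O$. One instance: - Issue 1 has candidates $\{0,1\}$ and issue 2 has candidates $\{a,b,c,d\}$ (ties broken alphabetically); there are $n=15$ agents, and $(r^1,r^2)=(2,1)$ for all agents. - Preferences are $\mathcal O$-legal for $\mathcal O=(1,2)$. - Agent $j$ ranks issue 2 as $b\succ c\succ a\succ d$ if $f^1=0$, and as $c\succ b\succ a\succ d$ if $f^1=1$. - Agent $k$ always ranks issue 2 as $a\succ d\succ b\succ c$. - The initial profile has score tuple $\{(7,8),(3,5,5,2)\}$ and $a_j=a_k=(0,a)$. From this profile the LDI steps $(0,a)\to(0,d)$ by $j$, $(0,a)\to(0,d)$ by $k$, $(0,d)\to(0,a)$ by $j$, $(0,d)\to(0,a)$ by $k$ form a cycle.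
   Context: Issues $\mathcal P=\{1,\dots,p\}$ with finite candidate sets $D_i$, and alternatives $\mathcal D=\prod_iD_i$. There are $n$ agents with strict rankings $\succ_j$ over $\mathcal D$, and vote profiles $a\in\mathcal D^n$. Score tuples and outcomes: - For a score tuple $v$ (vectors $v^i\in\mathbb N^{D_i}$), the plurality outcome $f(v)$ picks on each issue the top-scoring candidate, with lexicographic tie-breaking. - $v+b$ adds one vote for $b^i$ on each issue $i$. - $s_{-j}(a)$ is the score tuple of $a$ without agent $j$. $\ell_\infty$ uncertainty with parameters $r_j$: $$\tilde S_{-j}(a;r_j)=\prod_i\{v^i:\max_c|v^i(c)-s^i_{-j}(c;a)|\le r^i_j\}.$$ Local dominance: $\hat a_j$ $S$-beats $a_j$ if some $v\in S$ has $f(v+\hat a_j)\succ_j f(v+a_j)$. It $S$-dominates $a_j$ if it $S$-beats $a_j$ and $a_j$ does not $S$-beat it. An LDI step on issue $i$ (with $S=\tilde S_{-j}(a;r_j)$) is a change to a vote that $S$-dominates $a_j$, differs from $a_j$ only on issue $i$, and is not $S$-dominated by another vote differing from $a_j$ only on issue $i$. Dynamics: at each round a scheduler selects an agent and an issue on which that agent has an LDI step, and the agent takes it. Convergence means every such sequence from every initial profile is finite. $\mathcal O$-legality: for an order $\mathcal O=(o_1,\dots,o_p)$ of the issues, a ranking is $\mathcal O$-legal if its relative ordering of the candidates of issue $o_i$ depends only on the values of issues $o_1,\dots,o_{i-1}$. *)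

(* Defs.v *)
From mathcomp Require Import all_boot all_fingroup.
Unset Printing Implicit Defensive.

Section Model.

(* p issues; issue i has candidate set D_i = 'I_(m i), candidates ordered by
   index (lexicographic tie-breaking = smallest index wins). *)
Variables (p : nat) (m : 'I_p -> nat).

Definition alt := {dffun forall i : 'I_p, 'I_(m i)}.

Definition score := forall i : 'I_p, 'I_(m i) -> nat.

Definition add_vote (v : score) (b : alt) : score :=
  fun i c => v i c + (b i == c).

Definition is_winner {k : nat} (w : 'I_k -> nat) (c : 'I_k) : Prop :=
  forall c', w c' <= w c /\ (w c' = w c -> c <= c').

Definition outcome (v : score) (x : alt) : Prop :=
  forall i, is_winner (v i) (x i).

(* a strict ranking over D: R x y means x is strictly preferred to y *)
Definition strict_ranking (R : rel alt) : Prop :=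
  irreflexive R /\ transitive R /\ (forall x y : alt, x != y -> R x y || R y x).

Definition differs_only_on (i : 'I_p) (x y : alt) : Prop :=
  forall i', i' != i -> x i' = y i'.

(* O-legality for the order O = (O 0, O 1, ..., O (p-1)): the relative
   (ceteris paribus) ordering of candidates of issue O k depends only on the
   values of issues O 0, ..., O (k-1). *)
Definition O_legal (O : {perm 'I_p}) (R : rel alt) : Prop :=
  forall (k : 'I_p) (x y x' y' : alt),
    differs_only_on (O k) x y -> differs_only_on (O k) x' y' ->
    x (O k) = x' (O k) -> y (O k) = y' (O k) ->
    (forall k' : 'I_p, k' < k -> x (O k') = x' (O k')) ->
    R x y = R x' y'.

Variable n : nat.

Definition profile := {ffun 'I_n -> alt}.

Definition score_without (a : profile) (j : 'I_n) : score :=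
  fun i c => \sum_(k < n | k != j) (a k i == c).

Definition uncertainty_set (a : profile) (j : 'I_n) (rj : 'I_p -> nat)
  (v : score) : Prop :=
  forall i c, v i c <= score_without a j i c + rj i /\
              score_without a j i c <= v i c + rj i.

Definition S_beats (S : score -> Prop) (R : rel alt) (b' b : alt) : Prop :=
  exists v, S v /\ exists x y, outcome (add_vote v b') x /\
                               outcome (add_vote v b) y /\ R x y.

Definition S_dominates (S : score -> Prop) (R : rel alt) (b' b : alt) : Prop :=
  S_beats S R b' b /\ ~ S_beats S R b b'.

Definition LDI_step (pref : 'I_n -> rel alt) (r : 'I_n -> 'I_p -> nat)
  (a : profile) (j : 'I_n) (i : 'I_p) (b' : alt) : Prop :=
  S_dominates (uncertainty_set a j (r j)) (pref j) b' (a j) /\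
  differs_only_on i (a j) b' /\
  ~ (exists b'', differs_only_on i (a j) b'' /\
       S_dominates (uncertainty_set a j (r j)) (pref j) b'' b').

Definition update (a : profile) (j : 'I_n) (b' : alt) : profile :=
  [ffun k => if k == j then b' else a k].

Definition ldi_move (pref : 'I_n -> rel alt) (r : 'I_n -> 'I_p -> nat)
  (a a' : profile) : Prop :=
  exists j i b', LDI_step pref r a j i b' /\ a' = update a j b'.

Definition ldi_converges (pref : 'I_n -> rel alt) (r : 'I_n -> 'I_p -> nat)
  : Prop :=
  ~ exists s : nat -> profile, forall t, ldi_move pref r (s t) (s t.+1).

End Model.

Arguments add_vote {p m} v b i c.
Arguments is_winner {k} w c.
Arguments outcome {p m} v x.
Arguments strict_ranking {p m} R.
Arguments differs_only_on {p m} i x y.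
Arguments O_legal {p m} O R.
Arguments score_without {p m n} a j i c.
Arguments uncertainty_set {p m n} a j rj v.
Arguments S_beats {p m} S R b' b.
Arguments S_dominates {p m} S R b' b.
Arguments LDI_step {p m n} pref r a j i b'.
Arguments update {p m n} a j b'.
Arguments ldi_move {p m n} pref r a a'.
Arguments ldi_converges {p m n} pref r.

(* The instance: issue 1 = 'I_2 ({0,1}), issue 2 = 'I_4 ({a,b,c,d}). *)
Definition m_ex (i : 'I_2) : nat := if val i == 0 then 2 else 4.
Definition r_ex (n : nat) (_ : 'I_n) (i : 'I_2) : nat := if val i == 0 then 2 else 1.

(* Main.v *)
Require Import Defs.
From mathcomp Require Import all_boot all_fingroup.
From mathcomp Require Import zify.

Fixpoint vecs (lo hi : seq nat) : seq (seq nat) :=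
  match lo, hi with
  | a :: lo', b :: hi' => [seq x :: l | x <- iota a (b.+1 - a), l <- vecs lo' hi']
  | _, _ => [:: [::]]
  end.

Lemma vecs_cons a lo b hi :
  vecs (a :: lo) (b :: hi) = [seq x :: l | x <- iota a (b.+1 - a), l <- vecs lo hi].
Proof. by []. Qed.

Lemma vecs_complete lo hi (W : nat -> nat) :
  size lo = size hi ->
  (forall c, c < size lo -> nth 0 lo c <= W c <= nth 0 hi c) ->
  exists2 l, l \in vecs lo hi & forall c, c < size lo -> nth 0 l c = W c.
Proof.
elim: lo hi W => [|a lo IH] [|b hi] W //; [move=> _ _ | move=> [Hs] H].
- by exists [::] => //; rewrite mem_seq1.
- have [l Hl Hn] := IH hi (fun c => W c.+1) Hs (fun c hc => H c.+1 hc).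
  exists (W 0 :: l); last by case.
  rewrite vecs_cons; apply/allpairsP; exists (W 0, l); split => //; rewrite mem_iota.
  have := H 0 isT => /=; lia.
Qed.

Lemma vecs_sound lo hi l : size lo = size hi -> l \in vecs lo hi ->
  size l = size lo /\
  forall c, c < size lo -> nth 0 lo c <= nth 0 l c <= nth 0 hi c.
Proof.
elim: lo hi l => [|a lo IH] [|b hi] l //.
- by move=> _; rewrite mem_seq1 => /eqP ->.
- move=> [Hs]; rewrite vecs_cons => /allpairsP [[x l'] [Hx Hl ->]].
  have [Hsz Hb] := IH hi l' Hs Hl.
  split; first by rewrite /= Hsz.
  case=> [|c] /= Hc; last exact: Hb.
  move: Hx; rewrite mem_iota /=; lia.
Qed.

Definition winl k (W : nat -> nat) c :=
  all (fun c' => (W c' <= W c) && ((W c' == W c) ==> (c <= c'))) (iota 0 k).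

Lemma winlP k (w : 'I_k -> nat) (W : nat -> nat) (c : 'I_k) :
  (forall c', w c' = W (val c')) -> is_winner w c <-> winl k W c.
Proof.
move=> E; split.
- move=> H; apply/allP => c'; rewrite mem_iota add0n => /andP[_ lt].
  have [h1 h2] := H (Ordinal lt).
  have E' := E (Ordinal lt); rewrite /= in E'.
  rewrite -E' -E; apply/andP; split => //; apply/implyP => /eqP; exact: h2.
- move/allP => H c'.
  have := H (val c'); rewrite mem_iota /= ltn_ord -!E => /(_ isT) /andP[h1 /implyP h2].
  split => // /eqP; exact: h2.
Qed.

Definition pairb lo hi k (bx by' x y : nat) :=
  has (fun l => winl k (fun c => nth 0 l c + (bx == c)) x &&
                winl k (fun c => nth 0 l c + (by' == c)) y) (vecs lo hi).

Section Issue.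
Variables (k : nat) (s : 'I_k -> nat) (r : nat) (lo hi : seq nat).
Hypotheses (Hslo : size lo = k) (Hshi : size hi = k)
  (Hlo : forall c : 'I_k, nth 0 lo c = s c - r)
  (Hhi : forall c : 'I_k, nth 0 hi c = s c + r).

Lemma link1 (v : 'I_k -> nat) (bx by' x y : 'I_k) :
  (forall c, v c <= s c + r /\ s c <= v c + r) ->
  is_winner (fun c => v c + (bx == c)) x ->
  is_winner (fun c => v c + (by' == c)) y ->
  pairb lo hi k bx by' x y.
Proof.
move=> Hv Hx Hy.
pose W n := if insub n is Some c then v c else 0.
have WE (c : 'I_k) : W c = v c by rewrite /W valK.
have [l Hl Hn] : exists2 l, l \in vecs lo hi & forall c, c < size lo -> nth 0 l c = W c.
  apply: vecs_complete; first by rewrite Hslo Hshi.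
  move=> c; rewrite Hslo => hc.
  have := Hlo (Ordinal hc); have := Hhi (Ordinal hc); have := Hv (Ordinal hc).
  have := WE (Ordinal hc); rewrite /= => -> ; lia.
have LE (c : 'I_k) : nth 0 l c = v c by rewrite Hn ?Hslo // WE.
apply/hasP; exists l => //; apply/andP; split.
- by apply/(@winlP _ (fun c => v c + (bx == c))) => // c'; rewrite LE.
- by apply/(@winlP _ (fun c => v c + (by' == c))) => // c'; rewrite LE.
Qed.

Lemma link2 (l : seq nat) (bx by' x y : 'I_k) :
  l \in vecs lo hi ->
  winl k (fun c => nth 0 l c + (val bx == c)) x ->
  winl k (fun c => nth 0 l c + (val by' == c)) y ->
  (forall c : 'I_k, nth 0 l c <= s c + r /\ s c <= nth 0 l c + r) /\
  is_winner (fun c : 'I_k => nth 0 l c + (bx == c)) x /\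
  is_winner (fun c : 'I_k => nth 0 l c + (by' == c)) y.
Proof.
move=> Hl Wx Wy.
have [_ Hb] := @vecs_sound lo hi l (etrans Hslo (esym Hshi)) Hl.
split; [|split].
- move=> c; have := Hb c; rewrite Hslo ltn_ord Hlo Hhi => /(_ isT); lia.
- by apply/(@winlP _ _ (fun c => nth 0 l c + (val bx == c))).
- by apply/(@winlP _ _ (fun c => nth 0 l c + (val by' == c))).
Qed.
End Issue.

Lemma m_ex_gt0 i : 0 < m_ex i.
Proof. by rewrite /m_ex; case: ifP. Qed.

Definition mk (x0 x1 : nat) : alt 2 m_ex :=
  [ffun i : 'I_2 => Ordinal (ltn_pmod (if val i == 0 then x0 else x1) (m_ex_gt0 i))].

Lemma mkE x0 x1 i : val (mk x0 x1 i) = (if val i == 0 then x0 else x1) %% m_ex i.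
Proof. by rewrite /mk ffunE. Qed.

Lemma I2 (i : 'I_2) : i = ord0 \/ i = ord_max.
Proof. by case: i => [[|[|//]]] Hi; [left|right]; apply/val_inj. Qed.

Lemma alt_ext (x y : alt 2 m_ex) :
  val (x ord0) = val (y ord0) -> val (x ord_max) = val (y ord_max) -> x = y.
Proof.
move=> H0 H1; apply/ffunP => i; case: (I2 i) => ->; apply/val_inj; by [].
Qed.

Definition aD (D : seq (nat * nat)) : profile 2 m_ex 15 :=
  [ffun k : 'I_15 => mk (nth (0,0) D k).1 (nth (0,0) D k).2].

Definition fA (D : seq (nat * nat)) k i' :=
  (if i' == 0 then (nth (0,0) D k).1 else (nth (0,0) D k).2) %% (if i' == 0 then 2 else 4).

Lemma aDE D k i : val (aD D k i) = fA D k i.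
Proof. by rewrite /aD ffunE mkE. Qed.

Definition swn D jn i' c := count (fun k => (k != jn) && (fA D k i' == c)) (iota 0 15).

Lemma sw_eq D j i c : score_without (aD D) j i c = swn D (val j) (val i) (val c).
Proof.
rewrite /score_without.
rewrite (eq_bigr (fun k : 'I_15 => (fun kn => if fA D kn i == c then 1 else 0) (val k)));
  last by move=> k _ /=; rewrite -aDE; case: eqP => [->|ne]; [rewrite eqxx|case: eqP => // /val_inj].
rewrite -(big_mkord (fun kn => kn != val j) (fun kn => if fA D kn i == c then 1 else 0)).
by rewrite -big_mkcondr sum1_count.
Qed.

Definition rank (isj : bool) x0 x1 :=
  4 * (1 - x0) + (if isj then (if x0 == 0 then nth 0 [:: 1; 3; 2; 0] x1 else nth 0 [:: 1; 2; 3; 0] x1)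
                  else nth 0 [:: 3; 1; 0; 2] x1).
Definition prefn isj x0 x1 y0 y1 := rank isj y0 y1 < rank isj x0 x1.
Definition pref (k : 'I_15) : rel (alt 2 m_ex) := fun x y =>
  prefn (val k == 0) (val (x ord0)) (val (x ord_max)) (val (y ord0)) (val (y ord_max)).

Definition rn (i' : nat) := if i' == 0 then 2 else 1.
Definition kn (i' : nat) := if i' == 0 then 2 else 4.
Definition lon D jn i' := [seq swn D jn i' c - rn i' | c <- iota 0 (kn i')].
Definition hin D jn i' := [seq swn D jn i' c + rn i' | c <- iota 0 (kn i')].

Definition beatn D jn isj bp0 bp1 b0 b1 :=
  has (fun x0 => has (fun y0 => pairb (lon D jn 0) (hin D jn 0) 2 bp0 b0 x0 y0 &&
    has (fun x1 => has (fun y1 => pairb (lon D jn 1) (hin D jn 1) 4 bp1 b1 x1 y1 &&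
        prefn isj x0 x1 y0 y1) (iota 0 4)) (iota 0 4)) (iota 0 2)) (iota 0 2).

Lemma lonE D j (i : 'I_2) (c : 'I_(m_ex i)) :
  nth 0 (lon D (val j) (val i)) c = score_without (aD D) j i c - @r_ex 15 j i.
Proof. by rewrite (nth_map 0) ?size_iota ?ltn_ord // nth_iota ?ltn_ord // sw_eq. Qed.
Lemma hinE D j (i : 'I_2) (c : 'I_(m_ex i)) :
  nth 0 (hin D (val j) (val i)) c = score_without (aD D) j i c + @r_ex 15 j i.
Proof. by rewrite (nth_map 0) ?size_iota ?ltn_ord // nth_iota ?ltn_ord // sw_eq. Qed.

Lemma beatsE D j b' b :
  S_beats (uncertainty_set (aD D) j (@r_ex 15 j)) (pref j) b' b <->
  beatn D (val j) (val j == 0) (val (b' ord0)) (val (b' ord_max)) (val (b ord0)) (val (b ord_max)).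
Proof.
split.
- case=> v [Hv [x [y [Hx [Hy HR]]]]].
  have P0 : pairb (lon D (val j) 0) (hin D (val j) 0) 2 (b' ord0) (b ord0) (x ord0) (y ord0).
    apply: (@link1 2 (fun c => score_without (aD D) j ord0 c) 2 _ _ _ _ _ _ (v ord0)).
    + by rewrite size_map size_iota.
    + by rewrite size_map size_iota.
    + move=> c; exact: (lonE D j ord0 c).
    + move=> c; exact: (hinE D j ord0 c).
    + move=> c; exact: Hv ord0 c.
    + exact: Hx ord0.
    + exact: Hy ord0.
  have P1 : pairb (lon D (val j) 1) (hin D (val j) 1) 4 (b' ord_max) (b ord_max) (x ord_max) (y ord_max).
    apply: (@link1 4 (fun c => score_without (aD D) j ord_max c) 1 _ _ _ _ _ _ (v ord_max)).
    + by rewrite size_map size_iota.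
    + by rewrite size_map size_iota.
    + move=> c; exact: (lonE D j ord_max c).
    + move=> c; exact: (hinE D j ord_max c).
    + move=> c; exact: Hv ord_max c.
    + exact: Hx ord_max.
    + exact: Hy ord_max.
  apply/hasP; exists (val (x ord0)); first by rewrite mem_iota add0n; exact: ltn_ord.
  apply/hasP; exists (val (y ord0)); first by rewrite mem_iota add0n; exact: ltn_ord.
  rewrite P0 andTb.
  apply/hasP; exists (val (x ord_max)); first by rewrite mem_iota add0n; exact: ltn_ord.
  apply/hasP; exists (val (y ord_max)); first by rewrite mem_iota add0n; exact: ltn_ord.
  by rewrite P1.
- rewrite /beatn => /hasP [x0 Hx0 /hasP [y0 Hy0 /andP [P0 /hasP [x1 Hx1 /hasP [y1 Hy1 /andP [P1 HR]]]]]].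
  move: P0 => /hasP [l0 Hl0 /andP [W0x W0y]].
  move: P1 => /hasP [l1 Hl1 /andP [W1x W1y]].
  move: Hx0 Hy0 Hx1 Hy1; rewrite !mem_iota !add0n /= => x0lt y0lt x1lt y1lt.
  have [B0 [X0 Y0]] := @link2 2 (fun c => score_without (aD D) j ord0 c) 2 _ _
    (etrans (size_map _ _) (size_iota _ _)) (etrans (size_map _ _) (size_iota _ _))
    (fun c => lonE D j ord0 c) (fun c => hinE D j ord0 c)
    l0 (b' ord0) (b ord0) (Ordinal x0lt) (Ordinal y0lt) Hl0 W0x W0y.
  have [B1 [X1 Y1]] := @link2 4 (fun c => score_without (aD D) j ord_max c) 1 _ _
    (etrans (size_map _ _) (size_iota _ _)) (etrans (size_map _ _) (size_iota _ _))
    (fun c => lonE D j ord_max c) (fun c => hinE D j ord_max c)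
    l1 (b' ord_max) (b ord_max) (Ordinal x1lt) (Ordinal y1lt) Hl1 W1x W1y.
  exists (fun i c => nth 0 (if val i == 0 then l0 else l1) (val c)); split.
  + move=> i; case: (I2 i) => -> c; [exact: B0 c | exact: B1 c].
  + exists (mk x0 x1), (mk y0 y1); split; [|split].
    * move=> i; case: (I2 i) => ->.
      - have -> : mk x0 x1 ord0 = Ordinal x0lt :> 'I_(m_ex ord0) by apply/val_inj; rewrite mkE /= modn_small.
        exact: X0.
      - have -> : mk x0 x1 ord_max = Ordinal x1lt :> 'I_(m_ex ord_max) by apply/val_inj; rewrite mkE /= modn_small.
        exact: X1.
    * move=> i; case: (I2 i) => ->.
      - have -> : mk y0 y1 ord0 = Ordinal y0lt :> 'I_(m_ex ord0) by apply/val_inj; rewrite mkE /= modn_small.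
        exact: Y0.
      - have -> : mk y0 y1 ord_max = Ordinal y1lt :> 'I_(m_ex ord_max) by apply/val_inj; rewrite mkE /= modn_small.
        exact: Y1.
    * by rewrite /pref !mkE /= !modn_small.
Qed.

Definition domn D jn isj x0 x1 y0 y1 :=
  beatn D jn isj x0 x1 y0 y1 && ~~ beatn D jn isj y0 y1 x0 x1.

Lemma domE D j b' b :
  S_dominates (uncertainty_set (aD D) j (@r_ex 15 j)) (pref j) b' b <->
  domn D (val j) (val j == 0) (val (b' ord0)) (val (b' ord_max)) (val (b ord0)) (val (b ord_max)).
Proof.
rewrite /S_dominates /domn; split.
- by case=> /beatsE -> /beatsE/negP.
- by case/andP => /beatsE H1 /negP H2; split => // /beatsE.
Qed.

Definition ldin D jn x0 x1 :=
  [&& domn D jn (jn == 0) x0 x1 (fA D jn 0) (fA D jn 1), x0 == fA D jn 0 &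
      all (fun z => ~~ domn D jn (jn == 0) (fA D jn 0) z x0 x1) (iota 0 4)].

Lemma ldi_link D j x0 x1 : x0 < 2 -> x1 < 4 -> ldin D (val j) x0 x1 ->
  LDI_step pref (@r_ex 15) (aD D) j ord_max (mk x0 x1).
Proof.
move=> h0 h1 /and3P [Hd He /allP Hall].
have m0 : val (mk x0 x1 ord0) = x0 by rewrite mkE /= modn_small.
have m1 : val (mk x0 x1 ord_max) = x1 by rewrite mkE /= modn_small.
split; [|split].
- by apply/domE; rewrite !aDE m0 m1.
- move=> i' ne; have -> : i' = ord0 by case: (I2 i') ne => // ->; rewrite eqxx.
  by apply/val_inj; rewrite aDE m0 (eqP He).
- case=> b'' [Hdiff /domE Hd'].
  have e0 : val (b'' ord0) = fA D (val j) 0 by rewrite -(Hdiff ord0 isT) aDE.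
  have := Hall (val (b'' ord_max)); rewrite mem_iota add0n ltn_ord => /(_ isT).
  by move: Hd'; rewrite e0 m0 m1 => ->.
Qed.

Lemma upd D D' j x0 x1 : x0 < 2 -> x1 < 4 ->
  all (fun k => nth (0,0) D' k == if k == val j then (x0, x1) else nth (0,0) D k) (iota 0 15) ->
  aD D' = update (aD D) j (mk x0 x1).
Proof.
move=> h0 h1 /allP H; apply/ffunP => k; rewrite /update /aD !ffunE.
have := H (val k); rewrite mem_iota add0n ltn_ord => /(_ isT) /eqP ->.
have E : (val k == val j) = (k == j) by [].
by rewrite E; case: (k == j).
Qed.

Definition others := [:: (0,0); (0,1); (0,1); (0,1); (0,1); (1,1);
  (1,2); (1,2); (1,2); (1,2); (1,2); (1,3); (1,3)].
Definition Dp (xj xk : nat) := (0, xj) :: (0, xk) :: others.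

Lemma c1 : ldin (Dp 0 0) 0 0 3. Proof. by vm_compute. Qed.
Lemma c2 : ldin (Dp 3 0) 1 0 3. Proof. by vm_compute. Qed.
Lemma c3 : ldin (Dp 3 3) 0 0 0. Proof. by vm_compute. Qed.
Lemma c4 : ldin (Dp 0 3) 1 0 0. Proof. by vm_compute. Qed.

Definition Dc (u : nat) :=
  if u == 0 then Dp 0 0 else if u == 1 then Dp 3 0 else if u == 2 then Dp 3 3 else Dp 0 3.

Definition jA : 'I_15 := ord0.
Definition kA : 'I_15 := @Ordinal 15 1 isT.

Lemma step u : u < 4 -> ldi_move pref (@r_ex 15) (aD (Dc u)) (aD (Dc (u.+1 %% 4))).
Proof.
case: u => [|[|[|[|//]]]] _.
- exists jA, ord_max, (mk 0 3); split; first by apply: ldi_link => //; exact: c1.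
  by apply: upd => //; vm_compute.
- exists kA, ord_max, (mk 0 3); split; first by apply: ldi_link => //; exact: c2.
  by apply: upd => //; vm_compute.
- exists jA, ord_max, (mk 0 0); split; first by apply: ldi_link => //; exact: c3.
  by apply: upd => //; vm_compute.
- exists kA, ord_max, (mk 0 0); split; first by apply: ldi_link => //; exact: c4.
  by apply: upd => //; vm_compute.
Qed.

Lemma rank_inj b x0 x1 y0 y1 : x0 < 2 -> x1 < 4 -> y0 < 2 -> y1 < 4 ->
  rank b x0 x1 = rank b y0 y1 -> x0 = y0 /\ x1 = y1.
Proof.
case: b; case: x0 => [|[|x0]] //; case: x1 => [|[|[|[|x1]]]] //;
  case: y0 => [|[|y0]] //; case: y1 => [|[|[|[|y1]]]] //= *; lia.
Qed.

Theorem proposition3 :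
  exists pref : 'I_15 -> rel (@alt 2 m_ex),
    (forall j, strict_ranking (pref j)) /\
    (forall j, O_legal (1%g : {perm 'I_2}) (pref j)) /\
    ~ ldi_converges pref (@r_ex 15).
Proof.
exists pref; split; [|split].
- move=> j; split; [|split].
  + by move=> x; rewrite /pref /prefn ltnn.
  + move=> y x z; rewrite /pref /prefn => h1 h2; exact: ltn_trans h2 h1.
  + move=> x y ne; rewrite /pref /prefn.
    case: ltngtP => // E.
    have [e0 e1] := rank_inj _ _ _ _ _ (ltn_ord (y ord0)) (ltn_ord (y ord_max))
                            (ltn_ord (x ord0)) (ltn_ord (x ord_max)) E.
    have exy : y = x by apply: alt_ext; rewrite ?e0 ?e1.
    by move: ne; rewrite exy eqxx.
- move=> j k x y x' y'; rewrite !perm1 => H1 H2 Hx Hy Hlt.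
  case: (I2 k) => Ek; subst k.
  + have e1 : x ord_max = y ord_max by apply: H1.
    have e2 : x' ord_max = y' ord_max by apply: H2.
    rewrite /pref Hx Hy -e1 -e2.
    have ha : val (x' ord0) < 2 := ltn_ord _.
    have hb : val (y' ord0) < 2 := ltn_ord _.
    have ha1 : val (x ord_max) < 4 := ltn_ord _.
    have hb1 : val (x' ord_max) < 4 := ltn_ord _.
    move: (val (x' ord0)) ha (val (y' ord0)) hb (val (x ord_max)) ha1 (val (x' ord_max)) hb1.
    move=> a0 ha b0 hb a1 ha1 b1 hb1.
    rewrite /prefn /rank.
    case: (val j == 0); case: a0 ha => [|[|a0]] //; case: b0 hb => [|[|b0]] //;
       case: a1 ha1 => [|[|[|[|a1]]]] //; case: b1 hb1 => [|[|[|[|b1]]]] //.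
  + have e1 : x ord0 = y ord0 by apply: H1.
    have e2 : x' ord0 = y' ord0 by apply: H2.
    have e3 : x ord0 = x' ord0 by have := Hlt ord0 isT; rewrite perm1.
    by rewrite /pref -e1 -e2 e3 Hx Hy.
- move=> H; apply: H.
  exists (fun t => aD (Dc (t %% 4))) => t.
  have -> : t.+1 %% 4 = (t %% 4).+1 %% 4 by rewrite -addn1 -modnDml addn1.
  apply: step; exact: ltn_pmod.
Qed.
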